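(* Let $v\in[m-1]$ and let $\hat{\mathcal{T}},\hat{\mathcal{T}}'$ be triangulations of $C([m-1]_{v+},n)$ with $\hat{\mathcal{T}}\leqslant_2\hat{\mathcal{T}}'$. Then $\hat{\mathcal{T}}[x\to v\leftarrow y]\leqslant_2\hat{\mathcal{T}}'[x\to v\leftarrow y]$.
   Context: For a finite totally ordered set $V$, $C(V,n)$ is the cyclic polytope, the convex hull in $\mathbb{R}^n$ of $p_n(t_v)=(t_v,\dots,t_v^n)$, $v\in V$, with $t_v$ increasing; $C(m,n)=C([m],n)$. A triangulation of $C(V,n)$ is a set of $(n+1)$-subsets of $V$ whose geometric simplices form a simplicial complex with union $C(V,n)$. Each triangulation $\mathcal{T}$ determines the piecewise-linear map $\sigma_{\mathcal{T}}:C(V,n)\to\mathbb{R}^{n+1}$ mapping each simplex of $\mathcal{T}$ affinely with $p_n(t_s)\mapsto p_{n+1}(t_s)$; the second higher Stasheff--Tamari order is $\mathcal{T}\leqslant_2\mathcal{T}'$ iff $\sigma_{\mathcal{T}}(z)_{n+1}\leqslant\sigma_{\mathcal{T}'}(z)_{n+1}$ for all $z\in C(V,n)$. For $v\in[m-1]$, $[m-1]_{v+}=\{1,\dots,v-1,x,y,v+1,\dots,m-1\}$ ordered with $v-1<x<y<v+1$. For $S\subseteq[m-1]_{v+}$, $S[x\to v\leftarrow y]=S$ if $S\cap\{x,y\}=\emptyset$ and $(S\setminus\{x,y\})\cup\{v\}$ otherwise; for a triangulation $\hat{\mathcal{T}}$ of $C([m-1]_{v+},n)$, $\hat{\mathcal{T}}[x\to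 v\leftarrow y]=\{S[x\to v\leftarrow y]:S\in\hat{\mathcal{T}}\}\cap\binom{[m-1]}{n+1}$, a triangulation of $C(m-1,n)$. *)

(* Defs.v *)
From HB Require Import structures.
From mathcomp Require Import all_boot all_order all_algebra.
From mathcomp Require Import reals.
Set Implicit Arguments. Unset Strict Implicit. Unset Printing Implicit Defensive.
Import Order.TTheory GRing.Theory Num.Theory.
Local Open Scope ring_scope.

(* Vertex set: a finite totally ordered set of size k, realised as 'I_k
   with its natural order; t : 'I_k -> R are the (increasing) parameters. *)

Definition pt (R : ringType) (n : nat) (a : R) : 'rV[R]_n :=
  \row_(j < n) a ^+ j.+1.

Definition increasing (R : realType) (k : nat) (t : 'I_k -> R) :=
  forall i j : 'I_k, (i < j)%N -> t i < t j.

Definition bary (R : realType) (k n : nat) (t : 'I_k -> R) (S : {set 'I_k})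
    (z : 'rV[R]_n) (lam : 'I_k -> R) : Prop :=
  [/\ forall i, 0 <= lam i,
      forall i, i \notin S -> lam i = 0,
      \sum_i lam i = 1
    & z = \sum_i lam i *: pt n (t i)].

Definition in_hull (R : realType) (k n : nat) (t : 'I_k -> R) (S : {set 'I_k})
    (z : 'rV[R]_n) : Prop :=
  exists lam, bary t S z lam.

Definition cyclic_polytope (R : realType) (k n : nat) (t : 'I_k -> R)
    (z : 'rV[R]_n) : Prop :=
  in_hull t [set: 'I_k] z.

Definition aff_indep (R : realType) (k n : nat) (t : 'I_k -> R) (S : {set 'I_k}) :=
  forall lam : 'I_k -> R,
    (forall i, i \notin S -> lam i = 0) ->
    \sum_i lam i = 0 ->
    \sum_i lam i *: pt n (t i) = 0 ->
    forall i, lam i = 0.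

Definition meet_is_face (R : realType) (k n : nat) (t : 'I_k -> R)
    (S S' : {set 'I_k}) :=
  exists2 F : {set 'I_k}, F \subset S &
    forall z : 'rV[R]_n, (in_hull t S z /\ in_hull t S' z) <-> in_hull t F z.

Definition triangulation (R : realType) (k n : nat) (t : 'I_k -> R)
    (T : {set {set 'I_k}}) : Prop :=
  [/\ forall S, S \in T -> #|S| = n.+1,
      forall S, S \in T -> aff_indep n t S,
      forall S S', S \in T -> S' \in T ->
        meet_is_face n t S S' /\ meet_is_face n t S' S
    & forall z : 'rV[R]_n,
        cyclic_polytope t z <-> exists2 S, S \in T & in_hull t S z].

(* second higher Stasheff--Tamari order: the last coordinate of sigma_T(z),
   computed through the (affine) lift on any simplex of T containing z,
   is <= that for T' at every z in C(V,n). *)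
Definition le2 (R : realType) (k n : nat) (t : 'I_k -> R)
    (T T' : {set {set 'I_k}}) : Prop :=
  forall (z : 'rV[R]_n) (S S' : {set 'I_k}) (lam lam' : 'I_k -> R),
    cyclic_polytope t z ->
    S \in T -> S' \in T' -> bary t S z lam -> bary t S' z lam' ->
    \sum_i lam i * t i ^+ n.+1 <= \sum_i lam' i * t i ^+ n.+1.

(* [m-1]_{v+} = {1,..,v-1,x,y,v+1,..,m-1} is realised as 'I_m (0-indexed):
   positions 0..v-2 are 1..v-1, position v-1 is x, position v is y,
   positions v+1..m-1 are v+1..m-1.  [m-1] is realised as 'I_(m-1), with
   position j being j+1.  The map x -> v <- y (identity elsewhere) is: *)
Definition contr_nat (v i : nat) : nat := if (i < v)%N then i else i.-1.

Definition contr_set (m v : nat) (S : {set 'I_m}) : {set 'I_(m.-1)} :=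
  [set j : 'I_(m.-1) | [exists i in S, nat_of_ord j == contr_nat v i]].

Definition contr_triang (m v n : nat) (T : {set {set 'I_m}})
    : {set {set 'I_(m.-1)}} :=
  [set S' : {set 'I_(m.-1)} |
     [exists S in T, S' == contr_set v S] && (#|S'| == n.+1)].

(* Main.v *)
Require Import Defs.
From HB Require Import structures.
From mathcomp Require Import all_boot all_order all_algebra.
From mathcomp Require Import reals.
From mathcomp Require Import zify ring lra.
From Stdlib Require Import Classical_Prop.
Import Order.TTheory GRing.Theory Num.Theory.
Local Open Scope ring_scope.

Set Implicit Arguments. Unset Strict Implicit.

Section Chain.
Variable R : realFieldType.

Fixpoint ch (c : nat -> R) (k L : nat) : Prop :=
  match L with
  | 0 => True
  | L'.+1 => exists2 p, (p < k)%N & 0 < c p /\ ch (fun i => - c i) p L'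
  end.

Lemma ch_le L : forall c k, ch c k L -> (L <= k)%N.
Proof.
elim: L => [//|L IH] c k /= [p pk [_ /IH]]; lia.
Qed.

Lemma ch_full k : forall c, ch c k k -> forall a, (a < k)%N -> 0 < c a * (-1) ^+ (k.-1 - a).
Proof.
elim: k => [//|k IH] c /= [p pk [cp /[dup] /ch_le kp H]] a ak.
have pe : p = k by lia.
subst p.
have [ak'|ka] := ltnP a k; last first.
  have -> : a = k by lia.
  by rewrite subnn expr0 mulr1.
have := IH _ H a ak'.
have -> : (k - a = (k.-1 - a).+1)%N by lia.
by rewrite exprS mulrA mulrN1 mulNr.
Qed.

Lemma ch_extract L : forall c k, ch c k L -> exists f : nat -> nat,
  [/\ forall a, (a < L)%N -> (f a < k)%N,
      forall a b, (a < b < L)%N -> (f a < f b)%N &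
      forall a, (a < L)%N -> 0 < c (f a) * (-1) ^+ (L.-1 - a)].
Proof.
elim: L => [|L IH] c k /=; first by exists id; split => //; lia.
case=> p pk [cp /IH [f [f1 f2 f3]]].
exists (fun a => if (a < L)%N then f a else p); split.
- move=> a aL; case: ifP => al //; have := f1 a al; lia.
- move=> a b /andP[ab bL]; have aL : (a < L)%N by lia.
  rewrite aL; case: ifP => bl; first by apply: f2; rewrite ab bl.
  exact: f1.
- move=> a aL; case: ifP => al; last first.
    have -> : (L - a = 0)%N by lia.
    by rewrite expr0 mulr1.
  have := f3 a al.
  have -> : (L - a = (L.-1 - a).+1)%N by lia.
  by rewrite exprS mulrA mulrN1 mulNr.
Qed.

End Chain.


Section P.
Variable R : realFieldType.

Lemma last_pos (c : nat -> R) k : (forall i, (i < k)%N -> c i <= 0) \/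
  exists p, [/\ (p < k)%N, 0 < c p & forall i, (p < i < k)%N -> c i <= 0].
Proof.
elim: k => [|k IH]; first by left.
case: (ltrP 0 (c k)) => ck.
  right; exists k; split => // i; lia.
case: IH => [H|[p [pk cp H]]].
  left => i ik; case: (ltngtP i k) => [/H //|?|->//]; lia.
right; exists p; split => //; first lia.
move=> i /andP[pi ik]; case: (ltngtP i k) => [?|?|->//]; last lia.
apply: H; lia.
Qed.

Lemma mono_inc (t : nat -> R) k : (forall i j, (i < j < k)%N -> t i < t j) ->
  forall i j, (i <= j < k)%N -> t i <= t j.
Proof.
move=> H i j /andP[ij jk]; case: (ltngtP i j) => [?|?|->//]; last lia.
by apply/ltW/H; lia.
Qed.

Lemma chain_poly L : forall (t c : nat -> R) k,
  (forall i j, (i < j < k)%N -> t i < t j) -> ~ ch c k L.+1 ->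
  exists q : {poly R}, [/\ q \is monic, size q = L.+1,
    forall i, (i < k)%N -> c i * q.[t i] <= 0 &
    forall x, t k.-1 < x -> 0 < q.[x]].
Proof.
elim: L => [|L IH] t c k tinc nch.
  exists 1; split; [exact: monic1|exact: size_poly1| |by move=> x _; rewrite hornerC].
  move=> i ik.
  rewrite hornerC mulr1; case: (lerP (c i) 0) => // ci.
  by case: nch; exists i => //.
case: (last_pos c k) => [H|[p [pk cp H]]].
  exists (('X - (t 0%N - 1)%:P) ^+ L.+1); split.
  - by rewrite monic_exp // monicXsubC.
  - by rewrite size_exp_XsubC.
  - move=> i ik; rewrite horner_exp hornerXsubC; apply: mulr_le0_ge0; first exact: H.
    apply: exprn_ge0; have := mono_inc tinc (i:=0) (j:=i); rewrite ik /= => /(_ isT); lra.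
  - move=> x xk; rewrite horner_exp hornerXsubC exprn_gt0 //.
    have : t 0%N <= t k.-1.
      case: k tinc {nch H} xk => [//|k] tinc xk; apply: mono_inc tinc _ _ _; lia.
    lra.
have nch' : ~ ch (fun i => - c i) p L.+1.
  move=> hc; apply: nch; exists p => //.
have tinc' : forall i j, (i < j < p)%N -> t i < t j.
  move=> i j ij; apply: tinc; lia.
have [q0 [m0 s0 h0 p0]] := IH t _ p tinc' nch'.
exists (('X - (t p)%:P) * q0); split.
- by rewrite monicMl // monicXsubC.
- by rewrite size_Mmonic ?monicXsubC ?s0 //; rewrite -?size_poly_eq0 ?s0 ?size_XsubC.
- move=> i ik; rewrite hornerM hornerXsubC.
  case: (ltngtP i p) => [ip|pi|->]; last by rewrite subrr mul0r mulr0.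
  + have := h0 i ip; have := tinc i p; rewrite ip pk => /(_ isT).
    move=> tip hq; rewrite mulrCA; apply: mulr_le0_ge0; first lra.
    rewrite mulNr in hq; lra.
  + have ci : c i <= 0 by apply: H; lia.
    have tpi : t p < t i by apply: tinc; lia.
    have : 0 < q0.[t i].
      apply: p0; case: p {nch' tinc' h0 H cp pk tpi} pi => [|p] pi /=.
        by apply: tinc; lia.
      by apply: tinc; lia.
    move=> hq; rewrite mulrCA; apply: mulr_ge0_le0; [lra|]; apply: mulr_le0_ge0; lra.
- move=> x xk; rewrite hornerM hornerXsubC.
  have tp : t p <= t k.-1 by apply: mono_inc tinc _ _ _; lia.
  apply: mulr_gt0; first lra.
  apply: p0; have : t p.-1 <= t p by apply: mono_inc tinc _ _ _; lia.
  lra.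
Qed.

Lemma chain_exists L (t c : nat -> R) k :
  (forall i j, (i < j < k)%N -> t i < t j) ->
  (forall e, (e < L)%N -> \sum_(i < k) c i * t i ^+ e = 0) ->
  0 < \sum_(i < k) c i * t i ^+ L -> ch c k L.+1.
Proof.
move=> tinc hz hp; apply: Classical_Prop.NNPP => nch.
have [q [mq sq hq _]] := chain_poly tinc nch.
have : \sum_(i < k) c i * q.[t i] <= 0.
  by rewrite -oppr_ge0 -sumrN; apply: sumr_ge0 => i _; rewrite oppr_ge0; apply: hq.
have -> : \sum_(i < k) c i * q.[t i] = \sum_(e < L.+1) q`_e * \sum_(i < k) c i * t i ^+ e.
  under eq_bigr do rewrite horner_coef sq big_distrr /=.
  rewrite exchange_big /=; apply: eq_bigr => e _; rewrite big_distrr /=.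
  by apply: eq_bigr => i _; rewrite mulrCA.
rewrite big_ord_recr /= big1 ?add0r => [|e _]; last by rewrite hz ?mulr0.
have -> : q`_L = 1 by move/monicP: mq; rewrite /lead_coef sq.
rewrite mul1r; lra.
Qed.
End P.


Lemma divdiff (K : fieldType) N (x : nat -> K) : (0 < N)%N -> injective x ->
  forall e, (e < N)%N ->
  \sum_(a < N) (\prod_(j < N | j != a) (x a - x j))^-1 * x a ^+ e = (e == N.-1)%:R.
Proof.
move=> N0 xi e eN.
have := lagrange_gen N0 xi (p := 'X^e); rewrite size_polyXn => /(_ eN) H.
have := congr1 (fun p : {poly K} => p`_N.-1) H.
rewrite /= coefXn eq_sym => ->; rewrite coef_sum; apply: eq_bigr => a _.
rewrite lagrangeE //= hornerXn coefCM [LHS]mulrC; congr (_ * _).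
have szP : size (\prod_(j < N | j != a) ('X - (x j)%:P)) = N.
  rewrite size_prod => [|j _]; last by rewrite polyXsubC_eq0.
  under eq_bigr do rewrite size_XsubC.
  rewrite sum_nat_const cardC1 card_ord; lia.
have HH : (\prod_(j < N | j != a) ('X - (x j)%:P))`_N.-1 = 1.
  by have /monicP := monic_prod_XsubC (index_enum 'I_N) (fun j : 'I_N => j != a) (fun j : 'I_N => x j); rewrite /lead_coef szP.
rewrite -[RHS]/((_%:P * \prod_(j < N | j != a) ('X - (x j)%:P))`_N.-1) coefCM HH mulr1.
rewrite horner_prod; congr (_^-1).
by apply: eq_bigr => j _; rewrite hornerXsubC.
Qed.


Definition extd (R : Type) k (F : 'I_k -> R) (d : nat -> R) (i : nat) : R :=
  if insub i is Some o then F o else d i.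

Lemma extdE (R : Type) k (F : 'I_k -> R) d (o : 'I_k) : extd F d o = F o.
Proof. by rewrite /extd valK. Qed.

Lemma extdN (R : Type) k (F : 'I_k -> R) d i : (k <= i)%N -> extd F d i = d i.
Proof. by move=> ki; rewrite /extd insubN // -leqNgt. Qed.

Lemma contr_mono v i j : (i <= j)%N -> (contr_nat v i <= contr_nat v j)%N.
Proof. rewrite /contr_nat; case: ifP; case: ifP; lia. Qed.

Lemma sign_agree (R : realFieldType) (u w : R) k :
  0 < u * (-1) ^+ k -> 0 < w * (-1) ^+ k -> (0 < w -> 0 < u) /\ (w < 0 -> u < 0).
Proof.
rewrite -signr_odd; case: (odd k); rewrite ?expr1 ?expr0 ?mulr1 ?mulrN1 => h1 h2; split => ?; lra.
Qed.

Lemma redist (R : realFieldType) (V : lmodType R) N m (jf : 'I_N -> 'I_m)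
  (g : 'I_N -> R) (F : 'I_m -> V) :
  \sum_j (\sum_(a < N) (jf a == j)%:R * g a) *: F j = \sum_(a < N) g a *: F (jf a).
Proof.
under eq_bigr do rewrite scaler_suml.
rewrite exchange_big /=; apply: eq_bigr => a _.
rewrite (bigD1 (jf a)) //= eqxx mul1r big1 ?addr0 // => j /negbTE.
by rewrite eq_sym => ->; rewrite mul0r scale0r.
Qed.

Lemma redistR (R : realFieldType) N m (jf : 'I_N -> 'I_m)
  (g : 'I_N -> R) (F : 'I_m -> R) :
  \sum_j (\sum_(a < N) (jf a == j)%:R * g a) * F j = \sum_(a < N) g a * F (jf a).
Proof.
under eq_bigr do rewrite mulr_suml.
rewrite exchange_big /=; apply: eq_bigr => a _.
rewrite (bigD1 (jf a)) //= eqxx mul1r big1 ?addr0 // => j /negbTE.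
by rewrite eq_sym => ->; rewrite !mul0r.
Qed.


Unset Implicit Arguments. Set Strict Implicit.

Theorem lemma3p6 (R : realType) (n m v : nat)
    (t : 'I_m -> R) (t' : 'I_(m.-1) -> R)
    (T T' : {set {set 'I_m}}) :
  (1 <= v <= m.-1)%N ->
  increasing t -> increasing t' ->
  triangulation n t T -> triangulation n t T' ->
  le2 n t T T' ->
  le2 n t' (contr_triang v n T) (contr_triang v n T').
Proof.
move=> hv tinc t'inc _ _ hle z Sc Sc' lam lam' _ HSc HSc'
  [l0 lout lsum lz] [l0' lout' lsum' lz'].
rewrite leNgt; apply/negP => Hgt.
move: HSc; rewrite inE => /andP[/existsP[S /andP[ST /eqP ScE]] _].
move: HSc'; rewrite inE => /andP[/existsP[S' /andP[S'T /eqP Sc'E]] _].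
pose M := m.-1.
pose c := extd (fun o : 'I_M => lam o - lam' o) (fun _ => 0).
pose tt := extd t' (fun _ => 0).
have ttinc : forall i j, (i < j < M)%N -> tt i < tt j.
  move=> i j /andP[ij jM]; have iM : (i < M)%N by lia.
  rewrite /tt -[i]/(val (Ordinal iM)) -[j]/(val (Ordinal jM)) !extdE.
  by apply: t'inc.
have cE : forall o : 'I_M, c o = lam o - lam' o by move=> o; rewrite /c extdE.
have ttE : forall o : 'I_M, tt o = t' o by move=> o; rewrite /tt extdE.
have sums : forall e, (e < n.+1)%N -> \sum_(i < M) c i * tt i ^+ e = 0.
  move=> e en; under eq_bigr do rewrite cE ttE mulrBl.
  rewrite sumrB; apply/eqP; rewrite subr_eq0; apply/eqP.
  case: e en => [|e] en.
    under eq_bigr do rewrite expr0 mulr1.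
    under [RHS]eq_bigr do rewrite expr0 mulr1.
    by rewrite lsum lsum'.
  have en' : (e < n)%N by lia.
  have coord : forall l : 'I_M -> R,
      (\sum_i l i *: pt n (t' i)) 0 (Ordinal en') = \sum_i l i * t' i ^+ e.+1.
    by move=> l; rewrite summxE; apply: eq_bigr => i _; rewrite !mxE.
  have := congr1 (fun A : 'rV[R]_n => A 0 (Ordinal en')) (etrans (esym lz) lz').
  by rewrite /= !coord.
have top : 0 < \sum_(i < M) c i * tt i ^+ n.+1.
  under eq_bigr do rewrite cE ttE mulrBl.
  rewrite sumrB subr_gt0; exact: Hgt.
have chc := chain_exists ttinc sums top.
have [f [f1 f2 f3]] := ch_extract chc.
pose N := n.+2.
have pre : forall a : 'I_N, exists j : 'I_m,
    [/\ contr_nat v j = f a, (0 < c (f a) -> j \in S) & (c (f a) < 0 -> j \in S')].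
  move=> a; have faM : (f a < M)%N by apply: f1.
  have co : c (f a) = lam (Ordinal faM) - lam' (Ordinal faM) by rewrite -cE.
  have := f3 a (ltn_ord a).
  case: (ltrgtP 0 (c (f a))) => hc; last by rewrite -hc mul0r ltxx.
  - have : Ordinal faM \in Sc.
      apply/negPn/negP => /lout h; have := l0' (Ordinal faM); lra.
    rewrite ScE inE => /existsP[j /andP[jS /eqP oj]] _.
    exists j; split; [by rewrite -oj|by []|move=> ?; lra].
  - have : Ordinal faM \in Sc'.
      apply/negPn/negP => /lout' h; have := l0 (Ordinal faM); lra.
    rewrite Sc'E inE => /existsP[j /andP[jS /eqP oj]] _.
    exists j; split; [by rewrite -oj|move=> ?; lra|by []].
have [jf hjf] := fin_all_exists pre.
have jinc : forall a b : 'I_N, (a < b)%N -> (jf a < jf b)%N.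
  move=> a b ab; rewrite ltnNge; apply/negP => /(contr_mono v).
  have [-> _ _] := hjf a; have [-> _ _] := hjf b.
  have := f2 a b; rewrite ab ltn_ord /= => /(_ isT); lia.
pose B := \sum_(a < N) `|t (jf a)|.
pose x := extd (fun a : 'I_N => t (jf a)) (fun i => B + 1 + i%:R).
have xE : forall a : 'I_N, x a = t (jf a) by move=> a; rewrite /x extdE.
have Bge : forall a : 'I_N, `|t (jf a)| <= B.
  move=> a; rewrite /B (bigD1 a) //= lerDl; apply: sumr_ge0 => *; exact: normr_ge0.
have B0 : 0 <= B by apply: sumr_ge0 => *; exact: normr_ge0.
have xinj : injective x.
  move=> i j; case: (ltnP i N) => iN; case: (ltnP j N) => jN.
  - rewrite -[i]/(val (Ordinal iN)) -[j]/(val (Ordinal jN)) !xE => e.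
    case: (ltngtP i j) => [ij|ji|//].
      by have := tinc _ _ (jinc (Ordinal iN) (Ordinal jN) ij); rewrite e ltxx.
    by have := tinc _ _ (jinc (Ordinal jN) (Ordinal iN) ji); rewrite e ltxx.
  - rewrite -[i]/(val (Ordinal iN)) xE /x extdN // => e.
    have h2 := Bge (Ordinal iN); rewrite e in h2.
    have h1 : (0 : R) <= j%:R by exact: ler0n.
    rewrite ger0_norm in h2; [exfalso; lra|lra].
  - rewrite -[j]/(val (Ordinal jN)) xE /x extdN // => e.
    have h2 := Bge (Ordinal jN); rewrite -e in h2.
    have h1 : (0 : R) <= i%:R by exact: ler0n.
    rewrite ger0_norm in h2; [exfalso; lra|lra].
  - rewrite /x !extdN // => /addrI /eqP; rewrite eqr_nat => /eqP //.
have xinc : forall i j, (i < j < N)%N -> x i < x j.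
  move=> i j /andP[ij jN]; have iN : (i < N)%N by lia.
  rewrite -[i]/(val (Ordinal iN)) -[j]/(val (Ordinal jN)) !xE.
  by apply: tinc; apply: jinc.
pose w := extd (fun a : 'I_N => (\prod_(j < N | j != a) (x a - x j))^-1) (fun _ => 0).
have dd : forall e, (e < N)%N -> \sum_(a < N) w a * x a ^+ e = (e == n.+1)%:R.
  move=> e eN; rewrite -(divdiff (K := R) (N := N) isT xinj eN).
  by apply: eq_bigr => a _; rewrite /w extdE.
have chw : ch w N N.
  apply: chain_exists xinc _ _.
    move=> e en; rewrite dd; last by lia.
    by have -> : (e == n.+1) = false by apply/eqP; lia.
  by rewrite dd // eqxx ltr01.
have wsgn := ch_full chw.
have agree : forall a : 'I_N, (0 < w a -> 0 < c (f a)) /\ (w a < 0 -> c (f a) < 0).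
  by move=> a; apply: (sign_agree (k := (N.-1 - a)%N)); [apply: f3 | apply: wsgn].
pose wp := fun a : 'I_N => (`|w a| + w a) / 2.
pose wn := fun a : 'I_N => (`|w a| - w a) / 2.
have wp0 : forall a, 0 <= wp a.
  move=> a; rewrite /wp; apply: divr_ge0 => //; have := ler_norm (- w a); rewrite normrN; lra.
have wn0 : forall a, 0 <= wn a.
  move=> a; rewrite /wn; apply: divr_ge0 => //; have := ler_norm (w a); lra.
have wpS : forall a, wp a != 0 -> jf a \in S.
  move=> a; case: (ltrP 0 (w a)) => wa.
    by move=> _; have [_ hS _] := hjf a; apply: hS; apply: (agree a).1.
  by rewrite /wp ler0_norm // addNr mul0r eqxx.
have wnS : forall a, wn a != 0 -> jf a \in S'.
  move=> a; case: (ltrP (w a) 0) => wa.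
    by move=> _; have [_ _ hS] := hjf a; apply: hS; apply: (agree a).2.
  by rewrite /wn ger0_norm // subrr mul0r eqxx.
have wpn : forall a, wp a - wn a = w a by move=> a; rewrite /wp /wn; field.
pose W := \sum_(a < N) wp a.
have Wpos : 0 < W.
  rewrite /W (bigD1 ord_max) //=; apply: ltr_pwDl; last by apply: sumr_ge0.
  have := wsgn n.+1 (ltnSn _); rewrite /= subnn expr0 mulr1 => h.
  by rewrite /wp gtr0_norm //; lra.
have sw0 : \sum_(a < N) w a = 0.
  by have := dd 0%N isT; under eq_bigr do rewrite expr0 mulr1.
have Wn : \sum_(a < N) wn a = W.
  apply/eqP; rewrite -subr_eq0 /W -sumrB.
  under eq_bigr do rewrite -opprB wpn.
  by rewrite sumrN sw0 oppr0.
have W0 : W != 0 by rewrite gt_eqF.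
pose lamA := fun j : 'I_m => \sum_(a < N) (jf a == j)%:R * (wp a / W).
pose lamB := fun j : 'I_m => \sum_(a < N) (jf a == j)%:R * (wn a / W).
pose z0 := \sum_j lamA j *: pt n (t j).
have wz : \sum_(a < N) w a *: pt n (t (jf a)) = 0.
  apply/rowP => e; rewrite summxE [RHS]mxE.
  under eq_bigr do rewrite !mxE -xE.
  rewrite dd; last by have := ltn_ord e; lia.
  by have -> : (e.+1 == n.+1) = false by apply/eqP; have := ltn_ord e; lia.
have sumA : \sum_j lamA j = 1.
  have := redistR jf (fun a => wp a / W) (fun _ => 1).
  under eq_bigr do rewrite mulr1. under [in X in _ = X -> _]eq_bigr do rewrite mulr1.
  by move=> ->; rewrite -mulr_suml divff.
have sumB : \sum_j lamB j = 1.
  have := redistR jf (fun a => wn a / W) (fun _ => 1).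
  under eq_bigr do rewrite mulr1. under [in X in _ = X -> _]eq_bigr do rewrite mulr1.
  by move=> ->; rewrite -mulr_suml Wn divff.
have bA : bary t S z0 lamA.
  split => //.
  - move=> j; apply: sumr_ge0 => a _; apply: mulr_ge0; first exact: ler0n.
    by apply: divr_ge0 => //; apply: ltW.
  - move=> j jS; apply: big1 => a _; have [e|ne] := eqVneq (jf a) j; last by rewrite mul0r.
    have [->|nz] := eqVneq (wp a) 0; first by rewrite mul0r mulr0.
    by have := wpS a nz; rewrite e (negbTE jS).
have bB : bary t S' z0 lamB.
  split => //.
  - move=> j; apply: sumr_ge0 => a _; apply: mulr_ge0; first exact: ler0n.
    by apply: divr_ge0 => //; apply: ltW.
  - move=> j jS; apply: big1 => a _; have [e|ne] := eqVneq (jf a) j; last by rewrite mul0r.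
    have [->|nz] := eqVneq (wn a) 0; first by rewrite mul0r mulr0.
    by have := wnS a nz; rewrite e (negbTE jS).
  - rewrite /z0 !redist; apply/eqP; rewrite -subr_eq0 -sumrB.
    under eq_bigr do rewrite -scalerBl -mulrBl wpn mulrC -scalerA.
    by rewrite -scaler_sumr wz scaler0.
have cyc : cyclic_polytope t z0.
  exists lamA; case: bA => h1 h2 h3 h4; split => // i; rewrite in_setT //.
have := hle z0 S S' lamA lamB cyc ST S'T bA bB.
rewrite !redistR.
have : \sum_(a < N) wp a / W * t (jf a) ^+ n.+1 - \sum_(a < N) wn a / W * t (jf a) ^+ n.+1
    = W^-1.
  rewrite -sumrB; under eq_bigr do rewrite -mulrBl -mulrBl wpn mulrC mulrA -xE.
  rewrite -mulr_suml; under eq_bigr do rewrite mulrC.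
  by rewrite dd // eqxx mul1r.
have : 0 < W^-1 by rewrite invr_gt0.
lra.
Qed.
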